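(* For any $b,c,d\in\mathbb C\setminus\{-1,-2,-3,\dots\}$, with $f$ as defined in the context: (1) $f(b,b)=1$; (2) $f(b,c)f(c,d)=f(b,d)$; (3) $\displaystyle f(b,c)=\left(\frac{c+1}{b+1}\right)f\left(\frac b2,\frac c2\right)f\left(\frac{c+1}{2},\frac{b+1}{2}\right)$.
   Context: Let $u_n=(-1)^{s_2(n)}$, where $s_2(n)$ is the sum of the binary digits of the non-negative integer $n$ (Thue–Morse sequence with values $\pm1$). For $b,c\in\mathbb C\setminus\{-1,-2,-3,\dots\}$ define $f(b,c)=\prod_{n=1}^\infty\left(\frac{n+b}{n+c}\right)^{u_n}$ (limit of partial products; this product converges for all such $b,c$). *)

(* Defs.v *)
From Stdlib Require Import Reals ZArith NArith.
From Coquelicot Require Import Coquelicot.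
Open Scope C_scope.

Fixpoint popcount_pos (p : positive) : nat :=
  match p with
  | xH => 1
  | xO q => popcount_pos q
  | xI q => S (popcount_pos q)
  end.

Definition s2 (n : nat) : nat :=
  match N.of_nat n with
  | N0 => 0
  | Npos p => popcount_pos p
  end.

Definition u (n : nat) : Z := ((-1) ^ Z.of_nat (s2 n))%Z.

(* x^{u_n}: since u_n is +1 or -1, this is x or x^{-1}. *)
Definition cpow_u (x : C) (n : nat) : C :=
  if Z.eqb (u n) 1 then x else Cinv x.

Definition not_neg_int (z : C) : Prop :=
  forall k : nat, z <> RtoC (- INR (S k)).

Fixpoint pprod (b c : C) (N : nat) : C :=
  match N with
  | O => 1
  | S m => pprod b c m * cpow_u ((RtoC (INR (S m)) + b) / (RtoC (INR (S m)) + c)) (S m)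
  end.

Definition fTM (b c : C) : C :=
  @lim C_CompleteNormedModule (filtermap (pprod b c) eventually).

(* Main.v *)
Require Import Defs.
From Stdlib Require Import Reals ZArith NArith Lia Lra.
From Coquelicot Require Import Coquelicot.
Open Scope C_scope.

Lemma s2_double j : s2 (2 * j) = s2 j.
Proof. unfold s2. rewrite Nat2N.inj_double. destruct (N.of_nat j); reflexivity. Qed.

Lemma s2_sdouble j : s2 (S (2 * j)) = S (s2 j).
Proof. unfold s2. rewrite Nat2N.inj_succ_double. destruct (N.of_nat j); reflexivity. Qed.

Lemma u_double j : u (2 * j) = u j.
Proof. unfold u. now rewrite s2_double. Qed.

Lemma u_sdouble j : u (S (2 * j)) = (- u j)%Z.
Proof. unfold u. rewrite s2_sdouble, Nat2Z.inj_succ, Z.pow_succ_r by lia. ring. Qed.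

Lemma u_pm n : u n = 1%Z \/ u n = (-1)%Z.
Proof. unfold u. generalize (s2 n). induction n0.
- left; reflexivity.
- rewrite Nat2Z.inj_succ, Z.pow_succ_r by lia. destruct IHn0 as [-> | ->]; [right|left]; reflexivity.
Qed.

Definition fac (b c : C) (n : nat) : C :=
  cpow_u ((RtoC (INR n) + b) / (RtoC (INR n) + c)) n.

Lemma pprod_S b c n : pprod b c (S n) = pprod b c n * fac b c (S n).
Proof. reflexivity. Qed.

Lemma cpow_u_double (x : C) j : cpow_u x (2 * j) = cpow_u x j.
Proof. unfold cpow_u. now rewrite u_double. Qed.

Lemma cpow_u_sdouble (x : C) j : x <> 0 -> cpow_u x (S (2 * j)) = cpow_u (/ x) j.
Proof. intros Hx. unfold cpow_u. rewrite u_sdouble.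
  destruct (u_pm j) as [-> | ->]; simpl; try reflexivity. field; auto. Qed.

Lemma nz_of b n : not_neg_int b -> RtoC (INR (S n)) + b <> 0.
Proof. intros hb H. apply (hb n). 
  replace b with (b + (RtoC (INR (S n)) - RtoC (INR (S n)))) by ring.
  rewrite <- RtoC_minus. 
  replace (b + RtoC (INR (S n) - INR (S n))) with (RtoC (INR (S n)) + b - RtoC (INR (S n))).
  2:{ rewrite RtoC_minus. ring. }
  rewrite H, RtoC_opp. ring. Qed.
Ltac nzfix1 H :=
  let E := fresh in intro E; apply H; cbv beta in E;
  match type of E with ?a = _ => match goal with |- ?X = _ =>
   first [ replace X with a by field; exact E
         | replace X with (a * 2) by field; rewrite E; ring
         | replace X with (a / 2) by field; rewrite E; field ] end end.
Ltac nzfix := repeat split; match goal with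
  | |- ~ _ => first [ assumption | match goal with H : ~ _ |- _ => nzfix1 H end ]
  end.
Ltac rtoc := repeat (rewrite ?RtoC_opp, ?RtoC_plus, ?RtoC_mult, ?RtoC_minus).

Lemma nni_half b : not_neg_int b -> not_neg_int (b / 2).
Proof. intros hb k H. apply (hb (2*k+1)%nat).
  replace b with (2 * (b/2)) by field. rewrite H.
  rewrite !S_INR, plus_INR, mult_INR. simpl (INR 2). simpl (INR 1). rtoc. ring. Qed.

Lemma nni_half1 b : not_neg_int b -> not_neg_int ((b + 1) / 2).
Proof. intros hb k H. apply (hb (2*k+2)%nat).
  replace b with (2 * ((b+1)/2) - 1) by field. rewrite H.
  rewrite !S_INR, plus_INR, mult_INR. simpl (INR 2). simpl (INR 1). rtoc. ring. Qed.

Lemma cpow_u_one n : cpow_u 1 n = 1.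
Proof. unfold cpow_u. destruct (u n =? 1)%Z; [reflexivity|]. field. Qed.

Lemma pprod_bb b N : not_neg_int b -> pprod b b N = 1.
Proof. intros hb. induction N as [|N IH]; [reflexivity|].
  rewrite pprod_S, IH. unfold fac.
  replace ((RtoC (INR (S N)) + b) / (RtoC (INR (S N)) + b)) with (RtoC 1).
  - rewrite cpow_u_one. ring.
  - field. now apply nz_of. Qed.

Lemma cpow_u_mul (x y : C) n : x <> 0 -> y <> 0 -> cpow_u x n * cpow_u y n = cpow_u (x * y) n.
Proof. intros. unfold cpow_u. destruct (u n =? 1)%Z; [reflexivity|]. field; auto. Qed.

Lemma pprod_mul b c d N : not_neg_int b -> not_neg_int c -> not_neg_int d ->
  pprod b c N * pprod c d N = pprod b d N.
Proof. intros hb hc hd. induction N as [|N IH]; [simpl; ring|].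
  rewrite !pprod_S, <- IH.
  assert (Hf : fac b c (S N) * fac c d (S N) = fac b d (S N)).
  { unfold fac.
  pose proof (nz_of b N hb). pose proof (nz_of c N hc). pose proof (nz_of d N hd).
  rewrite (cpow_u_mul _ _ (S N)).
  - f_equal. field; auto.
  - intro E. apply H. replace (RtoC (INR (S N)) + b) with ((RtoC (INR (S N)) + b) / (RtoC (INR (S N)) + c) * (RtoC (INR (S N)) + c)) by (field; auto). rewrite E. ring.
  - intro E. apply H0. replace (RtoC (INR (S N)) + c) with ((RtoC (INR (S N)) + c) / (RtoC (INR (S N)) + d) * (RtoC (INR (S N)) + d)) by (field; auto). rewrite E. ring. }
  rewrite <- Hf. ring.
Qed.

Lemma fac_even b c k : not_neg_int b -> not_neg_int c ->
  fac b c (2 * S k) = fac (b/2) (c/2) (S k).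
Proof. intros hb hc. unfold fac. rewrite cpow_u_double. f_equal.
  pose proof (nz_of (c/2) k (nni_half c hc)).
  replace (2 * S k)%nat with (S (2 * k + 1)) by lia.
  pose proof (nz_of c (2*k+1) hc).
  revert H H0. rewrite !S_INR, plus_INR, mult_INR. simpl (INR 2). simpl (INR 1). rtoc.
  intros. field. nzfix. Qed.

Lemma fac_odd b c k : not_neg_int b -> not_neg_int c ->
  fac b c (S (2 * S k)) = fac ((c+1)/2) ((b+1)/2) (S k).
Proof. intros hb hc. unfold fac. rewrite cpow_u_sdouble.
  - f_equal.
    pose proof (nz_of ((b+1)/2) k (nni_half1 b hb)).
    pose proof (nz_of ((c+1)/2) k (nni_half1 c hc)).
    replace (S (2 * S k))%nat with (S (2 * k + 2)) by lia.
    pose proof (nz_of c (2*k+2) hc). pose proof (nz_of b (2*k+2) hb).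
    revert H H0 H1 H2. rewrite !S_INR, !plus_INR, mult_INR. simpl (INR 2). simpl (INR 1). rtoc.
    intros. field. nzfix.
  - pose proof (nz_of c (2 * S k) hc). pose proof (nz_of b (2 * S k) hb).
    intro E. apply H0.
    replace (RtoC (INR (S (2 * S k))) + b) with ((RtoC (INR (S (2 * S k))) + b) / (RtoC (INR (S (2 * S k))) + c) * (RtoC (INR (S (2 * S k))) + c)) by (field; auto). rewrite E. ring.
Qed.

Lemma pprod_split b c M : not_neg_int b -> not_neg_int c ->
  pprod b c (S (2 * M)) = (c + 1) / (b + 1) * pprod (b / 2) (c / 2) M * pprod ((c + 1) / 2) ((b + 1) / 2) M.
Proof. intros hb hc. induction M as [|M IH].
  - simpl. unfold fac, cpow_u. simpl. 
    pose proof (nz_of c 0 hc). pose proof (nz_of b 0 hb). simpl in H, H0.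
    field. nzfix.
  - replace (S (2 * S M)) with (S (S (S (2 * M)))) by lia.
    rewrite (pprod_S b c (S (S (2 * M)))), (pprod_S b c (S (2 * M))), IH, !pprod_S.
    replace (S (S (2 * M))) with (2 * S M)%nat by lia.
    rewrite fac_odd, fac_even by auto. ring.
Qed.

Lemma Cmod_le_1 (P : C) : Cmod P <= 1 + Cmod (P - 1).
Proof. replace P with ((P - 1) + 1) at 1 by ring. 
  eapply Rle_trans; [apply Cmod_triangle|]. rewrite Cmod_1. lra. Qed.

Fixpoint pr (x : nat -> C) (m k : nat) : C :=
  match k with O => 1 | S k' => pr x m k' * x (m + k')%nat end.
Fixpoint sr (e : nat -> R) (m k : nat) : R :=
  match k with O => 0%R | S k' => (sr e m k' + e (m + k')%nat)%R end.

Lemma prod_bound x e m k :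
  (forall i, (i < k)%nat -> 0 <= e (m+i)%nat /\ Cmod (x (m+i)%nat - 1) <= e (m+i)%nat) ->
  Cmod (pr x m k - 1) <= exp (sr e m k) - 1.
Proof. induction k as [|k IH]; intros H.
  - simpl. replace (1 - 1 : C) with (RtoC 0) by ring. rewrite Cmod_0, exp_0. lra.
  - simpl. assert (IH' := IH (fun i Hi => H i ltac:(lia))).
    destruct (H k ltac:(lia)) as [He Hx].
    set (P := pr x m k) in *. set (z := x (m+k)%nat) in *. set (ee := e (m+k)%nat) in *.
    set (s := sr e m k) in *.
    replace (P * z - 1) with (P * (z - 1) + (P - 1)) by ring.
    eapply Rle_trans; [apply Cmod_triangle|]. rewrite Cmod_mult.
    pose proof (Cmod_le_1 P). pose proof (Cmod_ge_0 (z-1)). pose proof (Cmod_ge_0 (P-1)).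
    pose proof (exp_ineq1_le ee). rewrite exp_plus.
    assert (Cmod P * Cmod (z - 1) <= exp s * ee).
    { apply Rmult_le_compat; try apply Cmod_ge_0; lra. }
    assert (exp s * (1 + ee) <= exp s * exp ee).
    { apply Rmult_le_compat_l; [left; apply exp_pos | lra]. }
    nra.
Qed.

Lemma sr_tele K m k : (1 <= m)%nat ->
  sr (fun i => K * (/ INR i - / INR (S i)))%R m k = (K * (/ INR m - / INR (m + k)))%R.
Proof. intros Hm. induction k as [|k IH]; cbn [sr].
  - rewrite Nat.add_0_r. ring.
  - rewrite IH, Nat.add_succ_r. ring. Qed.

Lemma exp_m1_le s : 0 <= s -> exp s - 1 <= s * exp s.
Proof. intros Hs. pose proof (exp_ineq1_le (-s)).
  assert (exp (-s) * exp s = 1)%R by (rewrite <- exp_plus; replace (-s + s)%R with 0%R by ring; apply exp_0).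
  pose proof (exp_pos s). nra. Qed.

Lemma lowb (r : R) (c : C) : 0 <= r -> r - Cmod c <= Cmod (RtoC r + c).
Proof. intros Hr. assert (Cmod (RtoC r) = r) by (rewrite Cmod_R; apply Rabs_pos_eq; auto).
  replace (RtoC r) with ((RtoC r + c) + - c) in H at 1 by ring.
  pose proof (Cmod_triangle (RtoC r + c) (- c)). rewrite Cmod_opp in H0. lra. Qed.

Lemma nz_of' b n : not_neg_int b -> (1 <= n)%nat -> RtoC (INR n) + b <> 0.
Proof. intros hb Hn. destruct n; [lia|]. now apply nz_of. Qed.

Lemma div_bound (k a t : R) : 0 <= k -> 0 < t -> t <= a -> k / a <= k / t.
Proof. intros. unfold Rdiv. apply Rmult_le_compat_l; auto. apply Rinv_le_contravar; lra. Qed.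

Lemma fac_bound b c n t : not_neg_int b -> not_neg_int c -> (1 <= n)%nat -> 0 < t ->
  t <= INR n - Cmod b -> t <= INR n - Cmod c -> Cmod (fac b c n - 1) <= Cmod (b - c) / t.
Proof. intros hb hc Hn Ht H1 H2.
  pose proof (nz_of' b n hb Hn). pose proof (nz_of' c n hc Hn).
  pose proof (lowb (INR n) b (pos_INR n)). pose proof (lowb (INR n) c (pos_INR n)).
  unfold fac, cpow_u. destruct (u n =? 1)%Z.
  - replace ((RtoC (INR n) + b) / (RtoC (INR n) + c) - 1) with ((b - c) / (RtoC (INR n) + c)) by (field; auto).
    rewrite Cmod_div by auto. apply div_bound; auto using Cmod_ge_0; lra.
  - replace (/ ((RtoC (INR n) + b) / (RtoC (INR n) + c)) - 1) with (- (b - c) / (RtoC (INR n) + b)) by (field; auto).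
    rewrite Cmod_div by auto. rewrite Cmod_opp. apply div_bound; auto using Cmod_ge_0; lra.
Qed.

Lemma pair_core (K : R) (D1 D2 : C) (j : R) : 0 <= K -> 1 <= j -> j <= Cmod D1 -> j + 1 <= Cmod D2 ->
  K / Cmod (D1 * D2) <= K * (/ j - / (j + 1)).
Proof. intros. rewrite Cmod_mult.
  replace (K * (/ j - / (j + 1)))%R with (K / (j * (j + 1)))%R by (field; lra).
  apply div_bound; auto. nra. apply Rmult_le_compat; lra. Qed.

Lemma pair_bound b c j : not_neg_int b -> not_neg_int c -> (1 <= j)%nat ->
  Cmod b <= INR j -> Cmod c <= INR j ->
  Cmod (fac b c (2 * j) * fac b c (S (2 * j)) - 1) <= Cmod (b - c) * (/ INR j - / INR (S j)).
Proof. intros hb hc Hj Hb Hc.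
  assert (H2j : (1 <= 2 * j)%nat) by lia.
  pose proof (nz_of' b _ hb H2j) as nA. pose proof (nz_of' c _ hc H2j) as nB.
  pose proof (nz_of b (2 * j) hb) as nA1. pose proof (nz_of c (2 * j) hc) as nB1.
  pose proof (lowb (INR (2 * j)) b (pos_INR _)) as lA. pose proof (lowb (INR (2*j)) c (pos_INR _)) as lB.
  pose proof (lowb (INR (S (2 * j))) b (pos_INR _)) as lA1. pose proof (lowb (INR (S (2*j))) c (pos_INR _)) as lB1.
  assert (E1 : INR (2 * j) = (2 * INR j)%R) by (rewrite mult_INR; reflexivity).
  assert (E2 : INR (S (2 * j)) = (2 * INR j + 1)%R) by (rewrite S_INR, E1; reflexivity).

  assert (Hj1 : 1 <= INR j) by (apply (le_INR 1); auto).
  rewrite S_INR. pose proof (Cmod_ge_0 (b - c)) as K0.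
  unfold fac. rewrite cpow_u_double, cpow_u_sdouble.
  2:{ intro E. apply nA1. replace (RtoC (INR (S (2 * j))) + b) with ((RtoC (INR (S (2 * j))) + b) / (RtoC (INR (S (2 * j))) + c) * (RtoC (INR (S (2 * j))) + c)) by (field; auto). rewrite E. ring. }
  unfold cpow_u. destruct (u j =? 1)%Z.
  - replace ((RtoC (INR (2 * j)) + b) / (RtoC (INR (2 * j)) + c) * / ((RtoC (INR (S (2 * j))) + b) / (RtoC (INR (S (2 * j))) + c)) - 1)
      with ((b - c) / ((RtoC (INR (2 * j)) + c) * (RtoC (INR (S (2 * j))) + b))).
    + rewrite Cmod_div by (apply Cmult_neq_0; auto). apply pair_core; auto; lra.
    + rewrite (S_INR (2*j)), RtoC_plus in *. field. repeat split; auto.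
  - replace (/ ((RtoC (INR (2 * j)) + b) / (RtoC (INR (2 * j)) + c)) * / / ((RtoC (INR (S (2 * j))) + b) / (RtoC (INR (S (2 * j))) + c)) - 1)
      with (- (b - c) / ((RtoC (INR (2 * j)) + b) * (RtoC (INR (S (2 * j))) + c))).
    + rewrite Cmod_div by (apply Cmult_neq_0; auto). rewrite Cmod_opp. apply pair_core; auto; lra.
    + rewrite (S_INR (2*j)), RtoC_plus in *. field. repeat split; auto.
Qed.

Definition Qs b c m := pprod b c (S (2 * m)).
Definition ys b c j := fac b c (2 * j) * fac b c (S (2 * j)).

Lemma Q_step b c m : Qs b c (S m) = Qs b c m * ys b c (S m).
Proof. unfold Qs, ys. replace (S (2 * S m)) with (S (S (S (2*m)))) by lia.
  rewrite (pprod_S b c (S (S (2*m)))), (pprod_S b c (S (2*m))).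
  replace (S (S (2*m))) with (2 * S m)%nat by lia. ring. Qed.

Lemma Q_add b c m k : Qs b c (m + k) = Qs b c m * pr (ys b c) (S m) k.
Proof. induction k as [|k IH]; simpl.
  - rewrite Nat.add_0_r. ring.
  - rewrite Nat.add_succ_r, Q_step, IH. ring. Qed.

Lemma P_even b c m : pprod b c (S (S (2*m))) = Qs b c m * fac b c (2 * S m).
Proof. unfold Qs. rewrite pprod_S. replace (2 * S m)%nat with (S (S (2*m))) by lia. reflexivity. Qed.

Lemma exp_le (x y : R) : x <= y -> exp x <= exp y.
Proof. intros [H|H]; [left; now apply exp_increasing | subst; lra]. Qed.

Lemma inv_mono (m m0 : nat) : (m0 <= m)%nat -> / (INR m + 1) <= / (INR m0 + 1).
Proof. intros. apply Rinv_le_contravar. pose proof (pos_INR m0); lra. apply le_INR in H. lra. Qed.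

Lemma cauchy_main b c : not_neg_int b -> not_neg_int c -> forall eps, 0 < eps ->
  exists N0, forall N, (N0 <= N)%nat -> Cmod (pprod b c N - pprod b c N0) < eps.
Proof.
  intros hb hc eps Heps.
  set (K := Cmod (b - c)). assert (K0 : 0 <= K) by apply Cmod_ge_0.
  destruct (INR_archimed 1 (Cmod b + Cmod c)) as [J0 HJ0]; [lra|].
  set (J := S J0).
  assert (HJ1 : (1 <= J)%nat) by (unfold J; lia).
  assert (HJb : Cmod b <= INR J) by (unfold J; rewrite S_INR; pose proof (Cmod_ge_0 c); lra).
  assert (HJc : Cmod c <= INR J) by (unfold J; rewrite S_INR; pose proof (Cmod_ge_0 b); lra).
  set (G := exp K). assert (G1 : 1 <= G) by (unfold G; pose proof (exp_ineq1_le K); lra).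
  assert (Hpr : forall m k, (J <= m)%nat ->
     Cmod (pr (ys b c) (S m) k - 1) <= K * G * / (INR m + 1) /\
     Cmod (pr (ys b c) (S m) k - 1) <= G - 1).
  { intros m k Hm.
    assert (Hb := prod_bound (ys b c) (fun i => K * (/ INR i - / INR (S i)))%R (S m) k).
    rewrite sr_tele in Hb by lia.
    assert (HmJ : INR J <= INR m) by (apply le_INR; auto).
    assert (Hm1 : 1 <= INR m) by (pose proof (le_INR 1 J HJ1); simpl in *; lra).
    assert (Hb' : Cmod (pr (ys b c) (S m) k - 1) <= exp (K * (/ INR (S m) - / INR (S m + k))) - 1).
    { apply Hb. intros i Hi.
      assert (Hi1 : 1 <= INR (S m + i)) by (apply (le_INR 1); lia).
      assert (HiJ : INR J <= INR (S m + i)) by (apply le_INR; lia).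
      split.
      - apply Rmult_le_pos; auto. rewrite (S_INR (S m + i)).
        assert (/ (INR (S m + i) + 1) <= / INR (S m + i)) by (apply Rinv_le_contravar; lra). lra.
      - unfold ys. apply pair_bound; auto; try lia; lra. }
    set (a := (/ INR (S m))%R). set (a' := (/ INR (S m + k))%R).
    fold a a' in Hb'.
    assert (Ha : (a = / (INR m + 1))%R) by (unfold a; rewrite S_INR; reflexivity).
    assert (Ha1 : a <= 1). { rewrite Ha. rewrite <- Rinv_1. apply Rinv_le_contravar; lra. }
    assert (Ha' : 0 < a'). { unfold a'. apply Rinv_0_lt_compat. apply (lt_INR 0). lia. }
    assert (Haa : a' <= a). { unfold a, a'. apply Rinv_le_contravar. apply (lt_INR 0); lia. apply le_INR; lia. }
    set (s := (K * (a - a'))%R) in Hb'.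
    assert (s0 : 0 <= s) by (unfold s; apply Rmult_le_pos; lra).
    assert (sa : s <= K * a) by (unfold s; nra).
    assert (sK : s <= K) by nra.
    assert (es : exp s <= G) by (apply exp_le; auto).
    pose proof (exp_m1_le s s0).
    pose proof (exp_pos s).
    split.
    - rewrite <- Ha. assert (s * exp s <= K * a * G) by (apply Rmult_le_compat; lra). nra.
    - lra. }
  set (B := (Cmod (Qs b c J) * G)%R).
  assert (B0 : 0 <= B) by (unfold B; apply Rmult_le_pos; [apply Cmod_ge_0 | lra]).
  assert (HQ : forall m, (J <= m)%nat -> Cmod (Qs b c m) <= B).
  { intros m Hm. replace m with (J + (m - J))%nat by lia. rewrite Q_add, Cmod_mult.
    unfold B. apply Rmult_le_compat_l; [apply Cmod_ge_0|].
    destruct (Hpr J (m - J)%nat (le_n J)) as [_ H2].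
    pose proof (Cmod_le_1 (pr (ys b c) (S J) (m - J))). lra. }
  set (D := (B * (K * G))%R).
  assert (D0 : 0 <= D) by (unfold D; apply Rmult_le_pos; auto; apply Rmult_le_pos; lra).
  assert (HQQ : forall m k, (J <= m)%nat -> Cmod (Qs b c (m + k) - Qs b c m) <= D * / (INR m + 1)).
  { intros m k Hm. rewrite Q_add.
    replace (Qs b c m * pr (ys b c) (S m) k - Qs b c m) with (Qs b c m * (pr (ys b c) (S m) k - 1)) by ring.
    rewrite Cmod_mult. destruct (Hpr m k Hm) as [H1 _].
    unfold D. rewrite Rmult_assoc. apply Rmult_le_compat; auto using Cmod_ge_0. }
  assert (HPE : forall m, (J <= m)%nat -> Cmod (pprod b c (S (S (2 * m))) - Qs b c m) <= D * / (INR m + 1)).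
  { intros m Hm. rewrite P_even.
    replace (Qs b c m * fac b c (2 * S m) - Qs b c m) with (Qs b c m * (fac b c (2 * S m) - 1)) by ring.
    rewrite Cmod_mult.
    assert (HmJ : INR J <= INR m) by (apply le_INR; auto).
    assert (E : INR (2 * S m) = (2 * (INR m + 1))%R) by (rewrite mult_INR, (S_INR m); simpl (INR 2); ring).
    assert (Hf : Cmod (fac b c (2 * S m) - 1) <= K / (INR m + 1)).
    { apply fac_bound; auto; try lia; pose proof (pos_INR m); lra. }
    assert (K / (INR m + 1) <= K * G * / (INR m + 1)).
    { unfold Rdiv. assert (0 < / (INR m + 1)) by (apply Rinv_0_lt_compat; pose proof (pos_INR m); lra). apply Rmult_le_compat_r; [lra|]. nra. }
    unfold D. rewrite Rmult_assoc. apply Rmult_le_compat; auto using Cmod_ge_0. lra. }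
  destruct (INR_archimed eps (2 * D)) as [n Hn]; auto.
  set (m0 := Nat.max J n).
  assert (Hm0J : (J <= m0)%nat) by (unfold m0; lia).
  assert (Hm0n : INR n <= INR m0) by (apply le_INR; unfold m0; lia).
  assert (Hsmall : D * / (INR m0 + 1) < eps / 2).
  { assert (T : 0 < INR m0 + 1) by (pose proof (pos_INR m0); lra).
    apply (Rmult_lt_reg_r (INR m0 + 1)); auto.
    replace (D * / (INR m0 + 1) * (INR m0 + 1))%R with D by (field; lra). nra. }
  exists (S (2 * m0)). intros N HN.
  change (pprod b c (S (2 * m0))) with (Qs b c m0).
  destruct (Nat.Even_or_Odd N) as [[m Hm]|[m Hm]].
  - assert (Hmm : (m0 <= m - 1)%nat) by lia.
    replace N with (S (S (2 * (m - 1)))) by lia.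
    replace (pprod b c (S (S (2 * (m - 1)))) - Qs b c m0) with
      ((pprod b c (S (S (2 * (m - 1)))) - Qs b c (m - 1)) + (Qs b c (m0 + (m - 1 - m0)) - Qs b c m0)).
    2:{ replace (m0 + (m - 1 - m0))%nat with (m - 1)%nat by lia. ring. }
    eapply Rle_lt_trans; [apply Cmod_triangle|].
    pose proof (HPE (m - 1)%nat ltac:(lia)). pose proof (HQQ m0 (m - 1 - m0)%nat Hm0J).
    pose proof (inv_mono _ _ Hmm).
    assert (D * / (INR (m - 1) + 1) <= D * / (INR m0 + 1)) by (apply Rmult_le_compat_l; auto).
    lra.
  - replace N with (S (2 * m)) by lia. change (pprod b c (S (2 * m))) with (Qs b c m).
    replace m with (m0 + (m - m0))%nat by lia.
    pose proof (HQQ m0 (m - m0)%nat Hm0J). lra.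
Qed.

Lemma fTM_lim b c : not_neg_int b -> not_neg_int c ->
  filterlim (pprod b c) eventually (locally (fTM b c)).
Proof. intros hb hc. unfold fTM. apply filterlim_locally. intros eps.
  apply (@complete_cauchy C_CompleteNormedModule (filtermap (pprod b c) eventually)).
  - apply filtermap_proper_filter. apply eventually_filter.
  - intro e. destruct (cauchy_main b c hb hc e (cond_pos e)) as [N0 HN].
    exists (pprod b c N0). exists N0. intros N HN'.
    apply C_NormedModule_mixin_compat1. apply HN; auto.
Qed.

Lemma sub_odd : filterlim (fun M => S (2 * M)) eventually eventually.
Proof. intros P [N HN]. exists N. intros n Hn. apply HN. lia. Qed.

Lemma lim_mult (f g : nat -> C) (x y : C) :
  filterlim f eventually (locally x) -> filterlim g eventually (locally y) ->
  filterlim (fun n => f n * g n) eventually (locally (x * y)).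
Proof. intros Hf Hg.
  pose proof (proj1 (filterlim_locally_ball_norm (K := C_AbsRing) (U := C_NormedModule) f x) Hf) as Hf'.
  pose proof (proj1 (filterlim_locally_ball_norm (K := C_AbsRing) (U := C_NormedModule) g y) Hg) as Hg'.
  clear Hf Hg. rename Hf' into Hf. rename Hg' into Hg.
  apply (proj2 (filterlim_locally_ball_norm (K := C_AbsRing) (U := C_NormedModule) (fun n => f n * g n) (x * y))).
  intros eps. pose proof (cond_pos eps) as Heps.
  pose proof (Cmod_ge_0 x) as Hx. pose proof (Cmod_ge_0 y) as Hy.
  assert (P1 : 0 < Rmin 1 (eps / (2 * (Cmod y + 1)))).
  { apply Rmin_glb_lt; [lra|]. apply Rdiv_lt_0_compat; lra. }
  assert (P2 : 0 < eps / (2 * (Cmod x + 2))) by (apply Rdiv_lt_0_compat; lra).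
  specialize (Hf (mkposreal _ P1)). specialize (Hg (mkposreal _ P2)).
  generalize (filter_and _ _ Hf Hg). apply filter_imp. intros n [H1 H2].
  unfold ball_norm in *. simpl in *.
  change (Cmod (f n * g n - x * y) < eps).
  change (Cmod (f n - x) < Rmin 1 (eps / (2 * (Cmod y + 1)))) in H1.
  change (Cmod (g n - y) < eps / (2 * (Cmod x + 2))) in H2.
  replace (f n * g n - x * y) with (f n * (g n - y) + y * (f n - x)) by ring.
  eapply Rle_lt_trans; [apply Cmod_triangle|]. rewrite !Cmod_mult.
  pose proof (Rmin_l 1 (eps / (2 * (Cmod y + 1)))). pose proof (Rmin_r 1 (eps / (2 * (Cmod y + 1)))).
  assert (Hfn : Cmod (f n) <= Cmod x + 1).
  { replace (f n) with (x + (f n - x)) by ring. eapply Rle_trans; [apply Cmod_triangle|]. lra. }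
  assert (A1 : Cmod (f n) * Cmod (g n - y) <= (Cmod x + 1) * (eps / (2 * (Cmod x + 2)))).
  { apply Rmult_le_compat; try apply Cmod_ge_0; lra. }
  assert (A2 : Cmod y * Cmod (f n - x) <= Cmod y * (eps / (2 * (Cmod y + 1)))).
  { apply Rmult_le_compat_l; lra. }
  assert (B1 : (Cmod x + 1) * (eps / (2 * (Cmod x + 2))) < eps / 2).
  { apply (Rmult_lt_reg_r (2 * (Cmod x + 2))); [lra|]. field_simplify; [nra|lra]. }
  assert (B2 : Cmod y * (eps / (2 * (Cmod y + 1))) < eps / 2).
  { apply (Rmult_lt_reg_r (2 * (Cmod y + 1))); [lra|]. field_simplify; [nra|lra]. }
  lra.
Qed.

Theorem lemma2 (b c d : C)
  (hb : not_neg_int b) (hc : not_neg_int c) (hd : not_neg_int d) :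
  fTM b b = 1 /\
  fTM b c * fTM c d = fTM b d /\
  fTM b c = ((c + 1) / (b + 1)) * fTM (b / 2) (c / 2) * fTM ((c + 1) / 2) ((b + 1) / 2).
Proof.
  split; [|split].
  - apply (filterlim_locally_unique (K := C_AbsRing) (V := C_NormedModule) (F := eventually) (pprod b b)).
    + now apply fTM_lim.
    + apply filterlim_ext with (fun _ : nat => (1 : C)). intros; now rewrite pprod_bb.
      apply filterlim_const.
  - apply (filterlim_locally_unique (K := C_AbsRing) (V := C_NormedModule) (F := eventually) (pprod b d)).
    + apply filterlim_ext with (fun N => pprod b c N * pprod c d N).
      intros; now apply pprod_mul.
      apply lim_mult; now apply fTM_lim.
    + now apply fTM_lim.
  - apply (filterlim_locally_unique (K := C_AbsRing) (V := C_NormedModule) (F := eventually) (fun M => pprod b c (S (2 * M)))).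
    + eapply filterlim_comp; [apply sub_odd | now apply fTM_lim].
    + apply filterlim_ext with (fun M => (c + 1) / (b + 1) * pprod (b / 2) (c / 2) M * pprod ((c + 1) / 2) ((b + 1) / 2) M).
      intros; symmetry; now apply pprod_split.
      apply lim_mult; [apply lim_mult|].
      * apply filterlim_const.
      * apply fTM_lim; now apply nni_half.
      * apply fTM_lim; now apply nni_half1.
Qed.
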